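(* Let $\rho_{AB}$ be a state on $H_A\otimes H_B$ (finite-dimensional), and let $\rho_{BA}$ denote the same state with tensor factors ordered $B,A$. Consider $\rho_{BA}\otimes\rho_{AB}$ on $H_{B}\otimes H_{A}\otimes H_{A}\otimes H_{B}$, with the nonbilocality measure taken with respect to the two middle factors $H_A\otimes H_A$. Then $N_H^b(\rho_{BA}\otimes\rho_{AB})\ge N_H(\rho_{AB})$; in particular, $N_H(\rho_{AB})>0$ implies $N_H^b(\rho_{BA}\otimes\rho_{AB})>0$.
   Context: $\|X\|=\sqrt{\mathrm{tr}(X^\dagger X)}$ is the Hilbert–Schmidt norm. The modified measurement-induced nonlocality is $N_H(\rho_{AB})=\max_{\Pi^A}\|\sqrt{\rho_{AB}}-\Pi^A(\sqrt{\rho_{AB}})\|^2$, the maximum over von Neumann measurements $\Pi^A=\{\Pi^A_k\}$ on $H_A$ with $\sum_k\Pi^A_k\rho_A\Pi^A_k=\rho_A$, where $\Pi^A(X)=\sum_k(\Pi^A_k\otimes I^B)X(\Pi^A_k\otimes I^B)$. For a state $\sigma$ on $H_1\otimes H_2\otimes H_3\otimes H_4$ of the form $\sigma=\sigma_{12}\otimes\sigma_{34}$, the nonbilocality measure is $N_H^b(\sigma)=\max_{\Pi^{23}}\|\sqrt{\sigma}-\Pi^{23}(\sqrt\sigma)\|^2$, the maximum over von Neumann measurements $\{\Pi^{23}_h\}$ on $H_2\otimes H_3$ leaving the reduced state $\sigma_{23}$ invariant, with $\Pi^{23}(X)=\sum_h(I\otimes\Pi^{23}_h\otimes I)X(I\otimes\Pi^{23}_h\otimes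 I)$. *)

(* Defs.v *)
From HB Require Import structures.
From mathcomp Require Import all_boot all_algebra.
From mathcomp Require Import complex mxtens.
From mathcomp Require Import classical_sets reals.

Set Implicit Arguments.
Unset Strict Implicit.
Unset Printing Implicit Defensive.

Import GRing.Theory Num.Theory.
Local Open Scope ring_scope.

Section QuantumDefs.
Variable C : numClosedFieldType.

Definition adjmx m n (X : 'M[C]_(m, n)) : 'M[C]_(n, m) := map_mx Num.conj X^T.

Definition psdmx n (A : 'M[C]_n) : Prop :=
  adjmx A = A /\ forall v : 'rV[C]_n, 0 <= (v *m A *m adjmx v) 0 0.

Definition density n (A : 'M[C]_n) : Prop := psdmx A /\ \tr A = 1.

(* square root of a (normal, in particular positive semidefinite) matrix via the
   library spectral decomposition A = P^-1 diag(d) P, P unitary: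
   sqrt A = P^-1 diag(sqrt d) P  (for psd A this is the unique psd square root) *)
Definition sqrtmx n (A : 'M[C]_n) : 'M[C]_n :=
  invmx (spectralmx A) *m diag_mx (map_mx sqrtC (spectral_diag A)) *m spectralmx A.

Definition hs2 n (X : 'M[C]_n) : C := \tr (adjmx X *m X).

(* partial traces on H1 (x) H2 = 'I_(m * n) (lexicographic Kronecker indexing) *)
Definition ptrace2 m n (M : 'M[C]_(m * n)) : 'M[C]_m :=
  \matrix_(i, j) \sum_(k < n) M (mxtens_index (i, k)) (mxtens_index (j, k)).
Definition ptrace1 m n (M : 'M[C]_(m * n)) : 'M[C]_n :=
  \matrix_(i, j) \sum_(k < m) M (mxtens_index (k, i)) (mxtens_index (k, j)).

Definition swapmx m n (M : 'M[C]_(m * n)) : 'M[C]_(n * m) :=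
  \matrix_(i, j) M (mxtens_index ((mxtens_unindex i).2, (mxtens_unindex i).1))
                   (mxtens_index ((mxtens_unindex j).2, (mxtens_unindex j).1)).

(* A von Neumann measurement on a d-dimensional space is given by an
   orthonormal basis, i.e. the rows of a unitary matrix U; its projectors are
   Pi_k = |u_k><u_k| *)
Definition vNproj d (U : 'M[C]_d) (k : 'I_d) : 'M[C]_d :=
  adjmx (row k U) *m row k U.

Definition vN_leaves d (U : 'M[C]_d) (rho : 'M[C]_d) : Prop :=
  \sum_(k < d) vNproj U k *m rho *m vNproj U k = rho.

Definition measA dA dB (U : 'M[C]_dA) (X : 'M[C]_(dA * dB)) : 'M[C]_(dA * dB) :=
  \sum_(k < dA) (vNproj U k *t (1%:M : 'M[C]_dB)) *m X
                  *m (vNproj U k *t (1%:M : 'M[C]_dB)).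

(* H1 (x) H2 (x) H3 (x) H4 represented with indices 'I_(d1 * (d2 * d3) * d4);
   the Kronecker indexing is lexicographic, so this is the same as
   'I_(d1 * d2 * (d3 * d4)) up to the cast below. *)
Lemma dim4_assoc d1 d2 d3 d4 : (d1 * d2 * (d3 * d4) = d1 * (d2 * d3) * d4)%N.
Proof. by rewrite !mulnA. Qed.

Definition tens4 d1 d2 d3 d4 (s12 : 'M[C]_(d1 * d2)) (s34 : 'M[C]_(d3 * d4))
  : 'M[C]_(d1 * (d2 * d3) * d4) :=
  castmx (dim4_assoc d1 d2 d3 d4, dim4_assoc d1 d2 d3 d4) (s12 *t s34).

Definition red23 d1 d2 d3 d4 (S : 'M[C]_(d1 * (d2 * d3) * d4)) : 'M[C]_(d2 * d3) :=
  ptrace1 (ptrace2 S).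

Definition meas23 d1 d2 d3 d4 (U : 'M[C]_(d2 * d3))
  (X : 'M[C]_(d1 * (d2 * d3) * d4)) : 'M[C]_(d1 * (d2 * d3) * d4) :=
  \sum_(h < d2 * d3)
     (((1%:M : 'M[C]_d1) *t vNproj U h) *t (1%:M : 'M[C]_d4)) *m X
     *m (((1%:M : 'M[C]_d1) *t vNproj U h) *t (1%:M : 'M[C]_d4)).

End QuantumDefs.

Section Measures.
Variable R : realType.
Local Notation C := (R[i]).

Definition N_H dA dB (rho : 'M[C]_(dA * dB)) : R :=
  sup [set complex.Re (hs2 (sqrtmx rho - measA U (sqrtmx rho))) | U in
        [set U : 'M[C]_dA | U \is unitarymx /\ vN_leaves U (ptrace2 rho)]].

Definition N_Hb d1 d2 d3 d4 (s12 : 'M[C]_(d1 * d2)) (s34 : 'M[C]_(d3 * d4)) : R :=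
  let sigma := tens4 s12 s34 in
  sup [set complex.Re (hs2 (sqrtmx sigma - meas23 U (sqrtmx sigma))) | U in
        [set U : 'M[C]_(d2 * d3) | U \is unitarymx /\ vN_leaves U (red23 sigma)]].

End Measures.

(* Main.v *)
Require Import Defs.
From HB Require Import structures.
From mathcomp Require Import all_boot all_algebra.
From mathcomp Require Import complex mxtens.
From mathcomp Require Import classical_sets reals.
From mathcomp Require Import ring boolp.
Import GRing.Theory Num.Theory.
Local Open Scope ring_scope.

Set Implicit Arguments.
Unset Strict Implicit.
Unset Printing Implicit Defensive.

Lemma adjmxE {C : numClosedFieldType} m n (A : 'M[C]_(m, n)) i j :
  adjmx A i j = (A j i)^*.
Proof. by rewrite /adjmx !mxE. Qed.

Lemma adjmxM {C : numClosedFieldType} m n p (A : 'M[C]_(m, n)) (B : 'M[C]_(n, p)) :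
  adjmx (A *m B) = adjmx B *m adjmx A.
Proof.
apply/matrixP=> i j; rewrite !mxE rmorph_sum; apply: eq_bigr=> k _.
by rewrite !adjmxE rmorphM mulrC.
Qed.

Lemma adjmxK {C : numClosedFieldType} m n (A : 'M[C]_(m, n)) :
  adjmx (adjmx A) = A.
Proof. by apply/matrixP=> i j; rewrite !adjmxE conjCK. Qed.

Lemma adjmxD {C : numClosedFieldType} m n (A B : 'M[C]_(m, n)) :
  adjmx (A + B) = adjmx A + adjmx B.
Proof. by apply/matrixP=> i j; rewrite !(adjmxE, mxE) rmorphD. Qed.

Lemma adjmxN {C : numClosedFieldType} m n (A : 'M[C]_(m, n)) :
  adjmx (- A) = - adjmx A.
Proof. by apply/matrixP=> i j; rewrite !(adjmxE, mxE) rmorphN. Qed.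

Lemma adjmxB {C : numClosedFieldType} m n (A B : 'M[C]_(m, n)) :
  adjmx (A - B) = adjmx A - adjmx B.
Proof. by rewrite adjmxD adjmxN. Qed.

Lemma adjmx_sum {C : numClosedFieldType} m n (I : finType) (F : I -> 'M[C]_(m, n)) :
  adjmx (\sum_i F i) = \sum_i adjmx (F i).
Proof.
apply/matrixP=> i j; rewrite adjmxE !summxE rmorph_sum.
by apply: eq_bigr=> k _; rewrite adjmxE.
Qed.

Lemma adjmx1 {C : numClosedFieldType} n : adjmx (1%:M : 'M[C]_n) = 1%:M.
Proof. by apply/matrixP=> i j; rewrite adjmxE !mxE eq_sym rmorph_nat. Qed.

Lemma adjmx_tens {C : numClosedFieldType} m n p q (A : 'M[C]_(m, n)) (B : 'M[C]_(p, q)) :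
  adjmx (A *t B) = adjmx A *t adjmx B.
Proof.
apply/matrixP=> i j.
case: (mxtens_indexP i)=> i0 i1; case: (mxtens_indexP j)=> j0 j1.
by rewrite adjmxE !tensmxE !adjmxE rmorphM.
Qed.

Lemma adjmx_cast {C : numClosedFieldType} n n' (e : n = n') (A : 'M[C]_n) :
  adjmx (castmx (e, e) A) = castmx (e, e) (adjmx A).
Proof. by case: n' / e. Qed.

Lemma castmxM {C : numClosedFieldType} n n' (e : n = n') (A B : 'M[C]_n) :
  castmx (e, e) (A *m B) = castmx (e, e) A *m castmx (e, e) B.
Proof. by case: n' / e. Qed.

Lemma castmx_sum {C : numClosedFieldType} n n' (e : n = n') (I : finType) (F : I -> 'M[C]_n) :
  castmx (e, e) (\sum_i F i) = \sum_i castmx (e, e) (F i).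
Proof. by case: n' / e. Qed.

Lemma castmxB {C : numClosedFieldType} n n' (e : n = n') (A B : 'M[C]_n) :
  castmx (e, e) (A - B) = castmx (e, e) A - castmx (e, e) B.
Proof. by case: n' / e. Qed.

Lemma castmx1 {C : numClosedFieldType} n n' (e : n = n') :
  castmx (e, e) (1%:M : 'M[C]_n) = 1%:M.
Proof. by case: n' / e. Qed.

Lemma mxtrace_cast {C : numClosedFieldType} n n' (e : n = n') (A : 'M[C]_n) :
  \tr (castmx (e, e) A) = \tr A.
Proof. by case: n' / e. Qed.

Lemma unitary_adjmx {C : numClosedFieldType} n (U : 'M[C]_n) :
  U \is unitarymx -> U *m adjmx U = 1%:M /\ adjmx U *m U = 1%:M.
Proof. by move=> /unitarymxP H; split=> //; apply: mulmx1C. Qed.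

Lemma tens11 {C : numClosedFieldType} m n :
  (1%:M : 'M[C]_m) *t (1%:M : 'M[C]_n) = 1%:M.
Proof.
apply/matrixP=> i j.
case: (mxtens_indexP i)=> i0 i1; case: (mxtens_indexP j)=> j0 j1.
rewrite tensmxE !mxE -natrM; congr (_%:R).
rewrite (inj_eq (can_inj (@mxtens_indexK _ _))).
by rewrite xpair_eqE; case: (i0 == j0); case: (i1 == j1).
Qed.

Lemma tensmx_suml {C : numClosedFieldType} m n p q (I : finType) (F : I -> 'M[C]_(m, n)) (B : 'M[C]_(p, q)) :
  (\sum_i F i) *t B = \sum_i (F i *t B).
Proof.
apply/matrixP=> i j; rewrite !(mxE, summxE) mulr_suml.
by apply: eq_bigr=> k _; rewrite !mxE.
Qed.

Lemma tensmx_sumr {C : numClosedFieldType} m n p q (I : finType) (A : 'M[C]_(m, n)) (F : I -> 'M[C]_(p, q)) :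
  A *t (\sum_i F i) = \sum_i (A *t F i).
Proof.
apply/matrixP=> i j; rewrite !(mxE, summxE) mulr_sumr.
by apply: eq_bigr=> k _; rewrite !mxE.
Qed.

Lemma mxtrace_tens {C : numClosedFieldType} m n (A : 'M[C]_m) (B : 'M[C]_n) :
  \tr (A *t B) = \tr A * \tr B.
Proof.
rewrite /mxtrace mulr_sum; apply: eq_bigr=> i _.
by rewrite !mxE.
Qed.

Lemma sum_tens {C : numClosedFieldType} m n (F : 'I_(m * n) -> C) :
  \sum_(h < m * n) F h = \sum_(i < m) \sum_(j < n) F (mxtens_index (i, j)).
Proof.
rewrite pair_big /=; rewrite (reindex (@mxtens_index m n)) /=.
  by apply: eq_bigr => -[i j].
by exists (@mxtens_unindex m n)=> k _; rewrite (mxtens_indexK, mxtens_unindexK).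
Qed.

Lemma sum_tens_mx {C : numClosedFieldType} m n p (F : 'I_(m * n) -> 'M[C]_p) :
  \sum_(h < m * n) F h = \sum_(i < m) \sum_(j < n) F (mxtens_index (i, j)).
Proof.
rewrite pair_big /=; rewrite (reindex (@mxtens_index m n)) /=.
  by apply: eq_bigr => -[i j].
by exists (@mxtens_unindex m n)=> k _; rewrite (mxtens_indexK, mxtens_unindexK).
Qed.
Definition swidx m n (k : 'I_(m * n)) : 'I_(n * m) :=
  mxtens_index ((mxtens_unindex k).2, (mxtens_unindex k).1).

Lemma swidx_idx m n (a : 'I_m) (b : 'I_n) :
  swidx (mxtens_index (a, b)) = mxtens_index (b, a).
Proof. by rewrite /swidx mxtens_indexK. Qed.

Lemma swidxK m n : cancel (@swidx m n) (@swidx n m).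
Proof.
move=> k; case: (mxtens_indexP k)=> a b.
by rewrite !swidx_idx.
Qed.

Lemma swidx_bij m n : bijective (@swidx m n).
Proof. by exists (@swidx n m); apply: swidxK. Qed.

Lemma swapmxE {C : numClosedFieldType} m n (M : 'M[C]_(m * n)) i j :
  swapmx M i j = M (swidx i) (swidx j).
Proof. by rewrite /swapmx mxE. Qed.

Lemma swapmx_idx {C : numClosedFieldType} m n (M : 'M[C]_(m * n)) a b a' b' :
  swapmx M (mxtens_index (b, a)) (mxtens_index (b', a')) =
  M (mxtens_index (a, b)) (mxtens_index (a', b')).
Proof. by rewrite swapmxE !swidx_idx. Qed.

Lemma swapmxM {C : numClosedFieldType} m n (A B : 'M[C]_(m * n)) :
  swapmx (A *m B) = swapmx A *m swapmx B.
Proof.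
apply/matrixP=> i j; rewrite swapmxE !mxE.
rewrite (reindex (@swidx n m)) /=; last by apply: onW_bij; apply: swidx_bij.
by apply: eq_bigr=> k _; rewrite !swapmxE.
Qed.

Lemma swapmx_adj {C : numClosedFieldType} m n (A : 'M[C]_(m * n)) :
  swapmx (adjmx A) = adjmx (swapmx A).
Proof. by apply/matrixP=> i j; rewrite swapmxE !adjmxE swapmxE. Qed.

Lemma swapmxB {C : numClosedFieldType} m n (A B : 'M[C]_(m * n)) :
  swapmx (A - B) = swapmx A - swapmx B.
Proof. by apply/matrixP=> i j; rewrite !(swapmxE, mxE). Qed.

Lemma swapmx_sum {C : numClosedFieldType} m n (I : finType) (F : I -> 'M[C]_(m * n)) :
  swapmx (\sum_i F i) = \sum_i swapmx (F i).
Proof.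
apply/matrixP=> i j; rewrite swapmxE !summxE.
by apply: eq_bigr=> k _; rewrite swapmxE.
Qed.

Lemma swapmx1 {C : numClosedFieldType} m n : swapmx (1%:M : 'M[C]_(m * n)) = 1%:M.
Proof.
apply/matrixP=> i j; rewrite swapmxE !mxE.
by rewrite (inj_eq (can_inj (@swidxK n m))).
Qed.

Lemma swapmx_tens {C : numClosedFieldType} m n (A : 'M[C]_m) (B : 'M[C]_n) :
  swapmx (A *t B) = B *t A.
Proof.
apply/matrixP=> i j.
case: (mxtens_indexP i)=> i0 i1; case: (mxtens_indexP j)=> j0 j1.
by rewrite swapmx_idx !tensmxE mulrC.
Qed.

Lemma mxtrace_swap {C : numClosedFieldType} m n (A : 'M[C]_(m * n)) :
  \tr (swapmx A) = \tr A.
Proof.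
rewrite /mxtrace (reindex (@swidx m n)) /=; last by apply: onW_bij; apply: swidx_bij.
by apply: eq_bigr=> k _; rewrite swapmxE swidxK.
Qed.

Lemma ptrace1_swap {C : numClosedFieldType} m n (A : 'M[C]_(m * n)) :
  ptrace1 (swapmx A) = ptrace2 A.
Proof.
apply/matrixP=> i j; rewrite !mxE; apply: eq_bigr=> k _.
by rewrite swapmx_idx.
Qed.

Lemma swapmx_map {C : numClosedFieldType} m n (f : C -> C) (A : 'M[C]_(m * n)) :
  swapmx (map_mx f A) = map_mx f (swapmx A).
Proof. by apply/matrixP=> i j; rewrite swapmxE [in RHS]mxE swapmxE mxE. Qed.

Lemma swapmx_diag {C : numClosedFieldType} m n (A : 'M[C]_(m * n)) :
  is_diag_mx A -> is_diag_mx (swapmx A).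
Proof.
move=> /is_diag_mxP dA; apply/is_diag_mxP=> i j ij; rewrite swapmxE dA //.
apply: contra ij=> /eqP /val_inj /(can_inj (@swidxK _ _)) ->; by [].
Qed.
Lemma idx4 d1 d2 d3 d4 (k : 'I_d1) (a1 : 'I_d2) (a2 : 'I_d3) (l : 'I_d4) :
  cast_ord (esym (dim4_assoc d1 d2 d3 d4))
    (mxtens_index (mxtens_index (k, mxtens_index (a1, a2)), l)) =
  mxtens_index (mxtens_index (k, a1), mxtens_index (a2, l)).
Proof.
apply: val_inj=> /=.
by rewrite !mulnDl !mulnA !addnA; congr (_ + _ + _).
Qed.

Lemma tens4E {C : numClosedFieldType} d1 d2 d3 d4 (A : 'M[C]_(d1 * d2)) (B : 'M[C]_(d3 * d4))
  k a1 a2 l k' b1 b2 l' :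
  tens4 A B (mxtens_index (mxtens_index (k, mxtens_index (a1, a2)), l))
            (mxtens_index (mxtens_index (k', mxtens_index (b1, b2)), l')) =
  A (mxtens_index (k, a1)) (mxtens_index (k', b1)) *
  B (mxtens_index (a2, l)) (mxtens_index (b2, l')).
Proof. by rewrite /tens4 castmxE !idx4 tensmxE. Qed.

Ltac dec4 i := let i0 := fresh "i0" in let l := fresh "l" in let k := fresh "k" in
  let a := fresh "a" in let a1 := fresh "a1" in let a2 := fresh "a2" in
  case: (mxtens_indexP i)=> i0 l; case: (mxtens_indexP i0)=> k a;
  case: (mxtens_indexP a)=> a1 a2.

Lemma tens4M {C : numClosedFieldType} d1 d2 d3 d4 (A B : 'M[C]_(d1 * d2)) (A' B' : 'M[C]_(d3 * d4)) :
  tens4 (A *m B) (A' *m B') = tens4 A A' *m tens4 B B'.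
Proof. by rewrite /tens4 -tensmx_mul castmxM. Qed.

Lemma tens4_adj {C : numClosedFieldType} d1 d2 d3 d4 (A : 'M[C]_(d1 * d2)) (B : 'M[C]_(d3 * d4)) :
  adjmx (tens4 A B) = tens4 (adjmx A) (adjmx B).
Proof. by rewrite /tens4 adjmx_cast adjmx_tens. Qed.

Lemma tens4_tr {C : numClosedFieldType} d1 d2 d3 d4 (A : 'M[C]_(d1 * d2)) (B : 'M[C]_(d3 * d4)) :
  \tr (tens4 A B) = \tr A * \tr B.
Proof. by rewrite /tens4 mxtrace_cast mxtrace_tens. Qed.

Lemma tens4_sum {C : numClosedFieldType} d1 d2 d3 d4 (I J : finType)
  (F : I -> 'M[C]_(d1 * d2)) (G : J -> 'M[C]_(d3 * d4)) :
  tens4 (\sum_i F i) (\sum_j G j) = \sum_i \sum_j tens4 (F i) (G j).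
Proof.
rewrite /tens4 tensmx_suml castmx_sum; apply: eq_bigr=> i _.
by rewrite tensmx_sumr castmx_sum.
Qed.

Lemma tens4_1 {C : numClosedFieldType} d1 d2 d3 d4 :
  tens4 (1%:M : 'M[C]_(d1 * d2)) (1%:M : 'M[C]_(d3 * d4)) = 1%:M.
Proof. by rewrite /tens4 tens11 castmx1. Qed.

Lemma tens_diag {C : numClosedFieldType} m n (A : 'M[C]_m) (B : 'M[C]_n) :
  is_diag_mx A -> is_diag_mx B -> is_diag_mx (A *t B).
Proof.
move=> /is_diag_mxP dA /is_diag_mxP dB; apply/is_diag_mxP=> i j.
case: (mxtens_indexP i)=> i0 i1; case: (mxtens_indexP j)=> j0 j1.
rewrite tensmxE; have [e0|ne0] := eqVneq i0 j0; last by rewrite dA ?mul0r.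
have [e1|ne1] := eqVneq i1 j1; last by rewrite dB ?mulr0.
by rewrite e0 e1 eqxx.
Qed.

Lemma tens4_diag {C : numClosedFieldType} d1 d2 d3 d4 (A : 'M[C]_(d1 * d2)) (B : 'M[C]_(d3 * d4)) :
  is_diag_mx A -> is_diag_mx B -> is_diag_mx (tens4 A B).
Proof.
move=> dA dB; rewrite /tens4; move: (tens_diag dA dB).
by case: _ / (dim4_assoc d1 d2 d3 d4).
Qed.

Lemma tens4_map_sqrt {C : numClosedFieldType} d1 d2 d3 d4 (A : 'M[C]_(d1 * d2)) (B : 'M[C]_(d3 * d4)) :
  (forall i j, 0 <= A i j) -> (forall i j, 0 <= B i j) ->
  map_mx sqrtC (tens4 A B) = tens4 (map_mx sqrtC A) (map_mx sqrtC B).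
Proof.
move=> pA pB; rewrite /tens4 map_castmx; congr castmx.
apply/matrixP=> i j.
case: (mxtens_indexP i)=> i0 i1; case: (mxtens_indexP j)=> j0 j1.
by rewrite mxE !tensmxE !mxE sqrtCM ?nnegrE.
Qed.

Lemma red23_tens4 {C : numClosedFieldType} d1 d2 d3 d4 (A : 'M[C]_(d1 * d2)) (B : 'M[C]_(d3 * d4)) :
  red23 (tens4 A B) = ptrace1 A *t ptrace2 B.
Proof.
apply/matrixP=> i j.
case: (mxtens_indexP i)=> a1 a2; case: (mxtens_indexP j)=> b1 b2.
rewrite tensmxE /red23 !mxE mulr_suml; apply: eq_bigr=> k _.
rewrite !mxE mulr_sumr; apply: eq_bigr=> l _.
by rewrite tens4E.
Qed.

Lemma proj23 {C : numClosedFieldType} d1 d2 d3 d4 (P : 'M[C]_d2) (Q : 'M[C]_d3) :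
  ((1%:M : 'M[C]_d1) *t (P *t Q)) *t (1%:M : 'M[C]_d4) =
  tens4 ((1%:M : 'M[C]_d1) *t P) (Q *t (1%:M : 'M[C]_d4)).
Proof.
apply/matrixP=> i j; dec4 i; dec4 j.
rewrite tens4E !tensmxE !mxE.
by rewrite mulrA mulrA [_ * P _ _]mulrC -!mulrA.
Qed.

Definition ip {C : numClosedFieldType} n (A B : 'M[C]_n) := \tr (adjmx A *m B).

Lemma hs2_ip {C : numClosedFieldType} n (A : 'M[C]_n) : hs2 A = ip A A.
Proof. by []. Qed.

Lemma ip_tens4 {C : numClosedFieldType} d1 d2 d3 d4 (A A' : 'M[C]_(d1 * d2)) (B B' : 'M[C]_(d3 * d4)) :
  ip (tens4 A B) (tens4 A' B') = ip A A' * ip B B'.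
Proof. by rewrite /ip tens4_adj -tens4M tens4_tr. Qed.

Lemma ip_swap {C : numClosedFieldType} m n (A B : 'M[C]_(m * n)) :
  ip (swapmx A) (swapmx B) = ip A B.
Proof. by rewrite /ip -swapmx_adj -swapmxM mxtrace_swap. Qed.

Lemma hs2B {C : numClosedFieldType} n (A B : 'M[C]_n) :
  hs2 (A - B) = ip A A - ip A B - ip B A + ip B B.
Proof.
rewrite /hs2 /ip adjmxB mulmxBl !mulmxBr !mxtraceD !raddfN /=.
ring.
Qed.

Lemma hs2_ge0 {C : numClosedFieldType} n (A : 'M[C]_n) : 0 <= hs2 A.
Proof.
rewrite /hs2 /mxtrace; apply: sumr_ge0=> i _; rewrite mxE.
apply: sumr_ge0=> k _; rewrite adjmxE mulrC; exact: mul_conjC_ge0.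
Qed.

Lemma sum_if_tr {C : numClosedFieldType} n K (h : 'I_K) (M : 'M[C]_n) :
  \sum_(k < K) \tr (if h == k then M else 0) = \tr M.
Proof.
rewrite (bigD1 h) //= eqxx big1 ?addr0 // => k /negPf.
by rewrite eq_sym => ->; rewrite mxtrace0.
Qed.

Lemma pinch_ip {C : numClosedFieldType} n K (Q : 'I_K -> 'M[C]_n) (Y : 'M[C]_n) :
  (forall h, adjmx (Q h) = Q h) ->
  (forall h k, Q h *m Q k = if h == k then Q h else 0) ->
  let PY := \sum_h Q h *m Y *m Q h in
  ip PY PY = ip Y PY /\ ip PY Y = ip Y PY.
Proof.
move=> Qadj Qmul PY.
have aPY : adjmx PY = \sum_h Q h *m adjmx Y *m Q h.
  by rewrite /PY adjmx_sum; apply: eq_bigr=> h _; rewrite !adjmxM Qadj mulmxA.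
have e2 : ip Y PY = \sum_h \tr (adjmx Y *m Q h *m Y *m Q h).
  rewrite /ip /PY mulmx_sumr raddf_sum; apply: eq_bigr=> h _.
  by rewrite !mulmxA.
split.
  rewrite e2 /ip aPY mulmx_suml raddf_sum; apply: eq_bigr=> h _.
  rewrite mulmx_sumr raddf_sum.
  transitivity (\sum_(k < K) \tr (if h == k then Q h *m adjmx Y *m Q h *m Y *m Q h else 0)).
    apply: eq_bigr=> k _; congr (\tr _).
    rewrite !mulmxA -[Q h *m adjmx Y *m Q h *m Q k]mulmxA Qmul.
    by case: eqP=> [<-|_]; rewrite ?mulmx0 ?mul0mx.
  idtac.
  rewrite sum_if_tr -!mulmxA mxtrace_mulC !mulmxA.
  by rewrite -[adjmx Y *m Q h *m Y *m Q h *m Q h]mulmxA Qmul eqxx.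
rewrite e2 /ip aPY mulmx_suml raddf_sum; apply: eq_bigr=> h _.
rewrite /= -!mulmxA (mxtrace_mulC (Q h)) !mulmxA //.
Qed.

Lemma pinch_hs2 {C : numClosedFieldType} n K (Q : 'I_K -> 'M[C]_n) (Y : 'M[C]_n) :
  (forall h, adjmx (Q h) = Q h) ->
  (forall h k, Q h *m Q k = if h == k then Q h else 0) ->
  let PY := \sum_h Q h *m Y *m Q h in
  hs2 (Y - PY) = hs2 Y - hs2 PY /\ ip Y PY = hs2 PY /\ ip PY Y = hs2 PY.
Proof.
move=> Qadj Qmul PY; have [e1 e2] := pinch_ip Y Qadj Qmul.
rewrite -/PY in e1 e2.
rewrite hs2B !hs2_ip e2 e1; split; last by split.
by ring.
Qed.

Lemma row_adj_row {C : numClosedFieldType} n (U : 'M[C]_n) h k :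
  row h U *m adjmx (row k U) = ((U *m adjmx U) h k)%:M.
Proof.
apply/matrixP=> i j; rewrite !ord1 [RHS]mxE eqxx mulr1n !mxE.
by apply: eq_bigr=> l _; rewrite !mxE.
Qed.

Lemma vNproj_adj {C : numClosedFieldType} n (U : 'M[C]_n) k :
  adjmx (vNproj U k) = vNproj U k.
Proof. by rewrite /vNproj adjmxM adjmxK. Qed.

Lemma vNproj_mul {C : numClosedFieldType} n (U : 'M[C]_n) h k :
  U \is unitarymx ->
  vNproj U h *m vNproj U k = if h == k then vNproj U h else 0.
Proof.
move=> /unitary_adjmx [UU _].
rewrite /vNproj mulmxA -[adjmx (row h U) *m row h U *m adjmx (row k U)]mulmxA.
rewrite row_adj_row UU mxE.
case: eqP=> [<-|_]; first by rewrite mulmx1.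
by rewrite mulr0n mul_mx_scalar scale0r mul0mx.
Qed.

Lemma vNprojE {C : numClosedFieldType} n (U : 'M[C]_n) k a b :
  vNproj U k a b = (U k a)^* * U k b.
Proof. by rewrite /vNproj mxE big_ord1 adjmxE !mxE. Qed.

Lemma measA_hs2 {C : numClosedFieldType} dA dB (U : 'M[C]_dA) (X : 'M[C]_(dA * dB)) :
  U \is unitarymx ->
  hs2 (X - measA U X) = hs2 X - hs2 (measA U X) /\
  ip X (measA U X) = hs2 (measA U X) /\ ip (measA U X) X = hs2 (measA U X).
Proof.
move=> Uu; apply: (@pinch_hs2 C _ _ (fun k => vNproj U k *t 1%:M)).
  by move=> h; rewrite adjmx_tens adjmx1 vNproj_adj.
move=> h k; rewrite tensmx_mul vNproj_mul // mulmx1.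
by case: eqP=> // _; rewrite tens0mx.
Qed.

Lemma meas23_hs2 {C : numClosedFieldType} d1 d2 d3 d4 (U : 'M[C]_(d2 * d3)) (X : 'M[C]_(d1 * (d2 * d3) * d4)) :
  U \is unitarymx ->
  hs2 (X - meas23 U X) = hs2 X - hs2 (meas23 U X).
Proof.
move=> Uu.
pose Q := fun k => ((1%:M : 'M[C]_d1) *t vNproj U k) *t (1%:M : 'M[C]_d4).
have Qa : forall h, adjmx (Q h) = Q h.
  by move=> h; rewrite /Q !adjmx_tens !adjmx1 vNproj_adj.
have Qm : forall h k, Q h *m Q k = if h == k then Q h else 0.
  move=> h k; rewrite /Q !tensmx_mul vNproj_mul // !mulmx1.
  by case: eqP=> // _; rewrite tensmx0 tens0mx.
by case: (pinch_hs2 X Qa Qm).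
Qed.

Lemma diag_intertwine {C : numClosedFieldType} n (W : 'M[C]_n) (d e : 'rV[C]_n) (f : C -> C) :
  W *m diag_mx d = diag_mx e *m W ->
  W *m diag_mx (map_mx f d) = diag_mx (map_mx f e) *m W.
Proof.
move=> hW; apply/matrixP=> i j; move/matrixP: hW => /(_ i j).
rewrite !mul_mx_diag !mul_diag_mx !mxE.
have [->|nz] := eqVneq (W i j) 0; first by rewrite !mul0r !mulr0.
by rewrite mulrC => /(mulIf nz) ->; rewrite mulrC.
Qed.

Lemma diag_conj {C : numClosedFieldType} n (P Q : 'M[C]_n) (d e : 'rV[C]_n) (f : C -> C) :
  P \is unitarymx -> Q \is unitarymx ->
  adjmx P *m diag_mx d *m P = adjmx Q *m diag_mx e *m Q ->
  adjmx P *m diag_mx (map_mx f d) *m P = adjmx Q *m diag_mx (map_mx f e) *m Q.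
Proof.
move=> /unitary_adjmx [PP PP'] /unitary_adjmx [QQ QQ'] H.
have [W defW] : {W | W = Q *m adjmx P} by exists (Q *m adjmx P).
have hW : W *m diag_mx d = diag_mx e *m W.
  have := congr1 (fun M => Q *m M *m adjmx P) H.
  rewrite !mulmxA QQ mul1mx -!mulmxA PP mulmx1 !mulmxA => E.
  by rewrite defW E mulmxA.
have hWf : W *m diag_mx (map_mx f d) = diag_mx (map_mx f e) *m W.
  exact: diag_intertwine.
have WP : W *m P = Q by rewrite defW -mulmxA PP' mulmx1.
have E1 : adjmx Q *m diag_mx (map_mx f e) *m Q = adjmx Q *m (diag_mx (map_mx f e) *m W) *m P.
  by rewrite -!mulmxA WP.
rewrite E1 -hWf defW !mulmxA QQ' mul1mx //.
Qed.

Lemma sqrtmx_form {C : numClosedFieldType} n (M W : 'M[C]_n) (e : 'rV[C]_n) :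
  W \is unitarymx -> M = adjmx W *m diag_mx e *m W ->
  sqrtmx M = adjmx W *m diag_mx (map_mx sqrtC e) *m W.
Proof.
move=> Wu HM.
have Mn : M \is normalmx.
  by apply/orthomx_spectral_subproof; exists (W, e)=> //=; rewrite invmx_unitary.
have HP := orthomx_spectralP Mn.
have Pu := spectral_unitarymx M.
rewrite /sqrtmx invmx_unitary //; apply: diag_conj=> //.
rewrite -HM; apply/esym; rewrite {1}HP invmx_unitary //.
Qed.

Lemma map_diag {C : numClosedFieldType} n (f : C -> C) (d : 'rV[C]_n) :
  f 0 = 0 -> map_mx f (diag_mx d) = diag_mx (map_mx f d).
Proof.
move=> f0; apply/matrixP=> i j; rewrite !mxE.
by case: eqP=> _; rewrite ?mulr1n ?mulr0n.
Qed.

Lemma diag_of {C : numClosedFieldType} n (A : 'M[C]_n) :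
  is_diag_mx A -> A = diag_mx (\row_i A i i).
Proof.
move=> /is_diag_mxP dA; apply/matrixP=> i j; rewrite !mxE.
have [<-|ne] := eqVneq i j; first by rewrite mulr1n.
by rewrite mulr0n dA.
Qed.

Lemma diag_mx_is_diag {C : numClosedFieldType} n (d : 'rV[C]_n) : is_diag_mx (diag_mx d).
Proof.
by apply/is_diag_mxP=> i j ij; rewrite mxE; case: eqP=> // /(congr1 val) /eqP; rewrite (negPf ij).
Qed.

Lemma adj_diag_nneg {C : numClosedFieldType} n (d : 'rV[C]_n) :
  (forall i, 0 <= d 0 i) -> adjmx (diag_mx d) = diag_mx d.
Proof.
move=> d0; apply/matrixP=> i j; rewrite adjmxE !mxE eq_sym.
by case: eqP=> [->|_]; rewrite ?mulr1n ?mulr0n ?rmorph0 ?geC0_conj.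
Qed.

Lemma psd_normal {C : numClosedFieldType} n (A : 'M[C]_n) : adjmx A = A -> A \is normalmx.
Proof. by move=> h; apply/normalmxP; rewrite /adjmx in h; rewrite h. Qed.

Lemma diag_entry_psd {C : numClosedFieldType} n (A P : 'M[C]_n) (d : 'rV[C]_n) :
  (forall v : 'rV[C]_n, 0 <= (v *m A *m adjmx v) 0 0) ->
  P *m A *m adjmx P = diag_mx d -> forall i, 0 <= d 0 i.
Proof.
move=> hA hP i; have := hA (row i P).
suff -> : (row i P *m A *m adjmx (row i P)) 0 0 = d 0 i by [].
rewrite -row_mul; move/matrixP: hP => /(_ i i); rewrite !mxE eqxx mulr1n => <-.
by apply: eq_bigr=> k _; rewrite !mxE.
Qed.

Lemma rho_facts {C : numClosedFieldType} n (rho : 'M[C]_n) : psdmx rho ->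
  [/\ spectralmx rho \is unitarymx,
      rho = adjmx (spectralmx rho) *m diag_mx (spectral_diag rho) *m spectralmx rho,
      (forall i, 0 <= spectral_diag rho 0 i) &
      sqrtmx rho = adjmx (spectralmx rho) *m diag_mx (map_mx sqrtC (spectral_diag rho)) *m spectralmx rho].
Proof.
move=> [ha hv].
have Pu := spectral_unitarymx rho.
have hd : rho = adjmx (spectralmx rho) *m diag_mx (spectral_diag rho) *m spectralmx rho.
  by rewrite {1}(orthomx_spectralP (psd_normal ha)) invmx_unitary.
split=> //; last by rewrite /sqrtmx invmx_unitary.
apply: (diag_entry_psd hv (P := spectralmx rho)).
have [PP _] := unitary_adjmx Pu.
rewrite [X in _ *m X *m _]hd !mulmxA PP mul1mx -mulmxA PP mulmx1 //.
Qed.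

Lemma sqrt_facts {C : numClosedFieldType} n (rho : 'M[C]_n) : psdmx rho ->
  adjmx (sqrtmx rho) = sqrtmx rho /\ sqrtmx rho *m sqrtmx rho = rho.
Proof.
move=> h; have [Pu hd d0 hs] := rho_facts h.
have [PP PP'] := unitary_adjmx Pu.
have s0 : forall i, 0 <= map_mx sqrtC (spectral_diag rho) 0 i.
  by move=> i; rewrite mxE sqrtC_ge0.
rewrite hs; split.
  by rewrite !adjmxM adjmxK adj_diag_nneg // mulmxA.
rewrite !mulmxA -[_ *m spectralmx rho *m adjmx _]mulmxA PP mulmx1.
rewrite -[_ *m diag_mx _ *m diag_mx _]mulmxA mulmx_diag [in RHS]hd; congr (_ *m diag_mx _ *m _).
by apply/rowP=> i; rewrite !mxE -expr2 sqrtCK.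
Qed.

Lemma conjW {C : numClosedFieldType} m n (P M : 'M[C]_(m * n)) :
  adjmx (tens4 (swapmx P) P) *m tens4 (swapmx M) M *m tens4 (swapmx P) P =
  tens4 (swapmx (adjmx P *m M *m P)) (adjmx P *m M *m P).
Proof. by rewrite tens4_adj -!tens4M -swapmx_adj -!swapmxM. Qed.

Lemma W_unitary {C : numClosedFieldType} m n (P : 'M[C]_(m * n)) :
  P \is unitarymx -> tens4 (swapmx P) P \is unitarymx.
Proof.
move=> Pu; have [PP _] := unitary_adjmx Pu; apply/unitarymxP.
change (tens4 (swapmx P) P *m adjmx (tens4 (swapmx P) P) = 1%:M).
by rewrite tens4_adj -tens4M -swapmx_adj -swapmxM PP swapmx1 tens4_1.
Qed.

Lemma sqrt_sigma {C : numClosedFieldType} dA dB (rho : 'M[C]_(dA * dB)) : psdmx rho ->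
  sqrtmx (tens4 (swapmx rho) rho) = tens4 (swapmx (sqrtmx rho)) (sqrtmx rho).
Proof.
move=> h; have [Pu hd d0 hs] := rho_facts h.
set P := spectralmx rho in Pu hd hs *; set d := spectral_diag rho in hd d0 hs *.
set E := tens4 (swapmx (diag_mx d)) (diag_mx d).
have Ed : is_diag_mx E by apply: tens4_diag; [apply: swapmx_diag|]; apply: diag_mx_is_diag.
have D0 : forall i j, 0 <= diag_mx d i j.
  by move=> i j; rewrite mxE; case: eqP=> _; rewrite ?mulr1n ?mulr0n.
have hsig : tens4 (swapmx rho) rho = adjmx (tens4 (swapmx P) P) *m diag_mx (\row_i E i i) *m tens4 (swapmx P) P.
  by rewrite -diag_of // conjW -hd.
rewrite (sqrtmx_form (W_unitary Pu) hsig) -map_diag ?sqrtC0 // -diag_of //.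
rewrite tens4_map_sqrt //; last by move=> i j; rewrite swapmxE.
by rewrite -swapmx_map map_diag ?sqrtC0 // conjW -hs.
Qed.

Lemma vNproj_tens {C : numClosedFieldType} n (U : 'M[C]_n) i j :
  vNproj (U *t U) (mxtens_index (i, j)) = vNproj U i *t vNproj U j.
Proof.
apply/matrixP=> a b.
case: (mxtens_indexP a)=> a1 a2; case: (mxtens_indexP b)=> b1 b2.
by rewrite vNprojE !tensmxE !vNprojE rmorphM mulrACA.
Qed.

Lemma tens_unitary {C : numClosedFieldType} n (U : 'M[C]_n) :
  U \is unitarymx -> U *t U \is unitarymx.
Proof.
move=> Uu; have [UU _] := unitary_adjmx Uu; apply/unitarymxP.
change ((U *t U) *m adjmx (U *t U) = 1%:M).
by rewrite adjmx_tens tensmx_mul UU tens11.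
Qed.

Lemma meas_tens4 {C : numClosedFieldType} dA dB (U : 'M[C]_dA) (X : 'M[C]_(dA * dB)) :
  meas23 (U *t U) (tens4 (swapmx X) X) = tens4 (swapmx (measA U X)) (measA U X).
Proof.
rewrite /meas23 /measA swapmx_sum tens4_sum sum_tens_mx; apply: eq_bigr=> i _.
apply: eq_bigr=> j _.
rewrite vNproj_tens proj23 -!tens4M !swapmxM swapmx_tens //.
Qed.

Lemma vN_tens {C : numClosedFieldType} n (U : 'M[C]_n) (A : 'M[C]_n) :
  vN_leaves U A -> vN_leaves (U *t U) (A *t A).
Proof.
rewrite /vN_leaves => h.
rewrite sum_tens_mx -{3}h tensmx_suml; apply: eq_bigr=> i _.
rewrite -{4}h tensmx_sumr; apply: eq_bigr=> j _.
by rewrite vNproj_tens !tensmx_mul.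
Qed.

Lemma Re_le (R : realType) (x y : R[i]) : x <= y -> complex.Re x <= complex.Re y.
Proof. by rewrite lecE => /andP[]. Qed.

Lemma sup_le (R : realType) (S1 S2 : set R) :
  has_ubound S2 -> (forall y, S2 y -> 0 <= y) ->
  (forall x, S1 x -> exists2 y, S2 y & x <= y) -> sup S1 <= sup S2.
Proof.
move=> hub h0 hmap.
case: (pselect (exists x, S1 x)) => [[x S1x]|nS1].
  apply: ge_sup; first by exists x.
  move=> z S1z; have [y S2y zy] := hmap z S1z.
  by apply: (order.Order.POrderTheory.le_trans zy); apply: ub_le_sup.
have -> : S1 = set0.
  by apply/seteqP; split=> z // S1z; apply: nS1; exists z.
rewrite sup0.
case: (pselect (exists y, S2 y)) => [[y S2y]|nS2].
  by apply: (order.Order.POrderTheory.le_trans (h0 y S2y)); apply: ub_le_sup.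
have -> : S2 = set0.
  by apply/seteqP; split=> z // S2z; apply: nS2; exists z.
by rewrite sup0.
Qed.

Theorem mainTheorem3 (R : realType) (dA dB : nat) (rho : 'M[R[i]]_(dA * dB)) :
  density rho ->
  N_H rho <= N_Hb (swapmx rho) rho /\ (0 < N_H rho -> 0 < N_Hb (swapmx rho) rho).
Proof.
move=> [hpsd htr].
have [Xa Xs] := sqrt_facts hpsd.
set X := sqrtmx rho in Xa Xs.
have hX1 : hs2 X = 1 by rewrite /hs2 Xa Xs.
set sig := tens4 (swapmx rho) rho.
have hsq : sqrtmx sig = tens4 (swapmx X) X by rewrite /sig sqrt_sigma.
have first : N_H rho <= N_Hb (swapmx rho) rho.
  rewrite /N_H /N_Hb /= -/sig -/X.
  apply: sup_le.
  - exists (complex.Re (hs2 (sqrtmx sig))) => y [U [Uu _] <-].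
    apply: Re_le; rewrite meas23_hs2 //.
    by rewrite -subr_ge0 opprB addrC subrK hs2_ge0.
  - move=> y [U _ <-]; have := Re_le (hs2_ge0 (sqrtmx sig - meas23 U (sqrtmx sig))).
    by [].
  move=> x [U [Uu Uv] <-].
  exists (complex.Re (hs2 (sqrtmx sig - meas23 (U *t U) (sqrtmx sig)))).
    exists (U *t U) => //; split; first exact: tens_unitary.
    by rewrite /sig red23_tens4 ptrace1_swap; apply: vN_tens.
  apply: Re_le.
  have [h1 [h2 h3]] := measA_hs2 X Uu.
  set X' := measA U X in h1 h2 h3 *.
  have p0 : 0 <= hs2 X' by apply: hs2_ge0.
  have p1 : 0 <= 1 - hs2 X' by rewrite -hX1 -h1 hs2_ge0.
  rewrite h1 hsq meas_tens4 -/X' hs2B !ip_tens4 !ip_swap -!hs2_ip h2 h3 hX1.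
  rewrite -subr_ge0.
  have -> : 1 * 1 - hs2 X' * hs2 X' - hs2 X' * hs2 X' + hs2 X' * hs2 X' - (1 - hs2 X')
            = hs2 X' * (1 - hs2 X') by ring.
  exact: mulr_ge0.
split=> // h; exact: order.Order.POrderTheory.lt_le_trans h first.
Qed.
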